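(* Let $m>n\ge1$ be integers. The filter class generated by $\mathbf{B}_m\times\mathbf{B}_n=\langle\mathbf{2}^m\times\mathbf{2}^n,\;P_m\times P_n\rangle$ consists precisely of the structures $\langle\mathbf{A},F\rangle$ where $\mathbf{A}$ is a Boolean algebra and $F$ is a non-empty $m$-filter on $\mathbf{A}$ which is either equal to $\mathbf{A}$ or contained in some $n$-filter $G\neq\mathbf{A}$. Equivalently, it is the subclass of $\mathsf{BA}_m$ consisting of those $\langle\mathbf{A},F\rangle$ satisfying, for every $k\ge n$ and all $x_1,\dots,x_k\in\mathbf{A}$: if $\bigwedge\Phi\in F$ for every $\Phi\subseteq_n\Delta_k$, where $\Delta_k=\{x_1,\dots,x_k,\neg(x_1\wedge\dots\wedge x_k)\}$, then $0\in F$.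
   Context: $\mathbf{2}^n$ denotes the Boolean algebra with $n$ atoms and $P_n$ its set of non-zero elements. Structures are pairs $\langle\mathbf{A},F\rangle$ with $\mathbf{A}$ a Boolean algebra and $F\subseteq\mathbf{A}$. A homomorphism $h\colon\langle\mathbf{A},F\rangle\to\langle\mathbf{B},G\rangle$ is strict if $F=h^{-1}[G]$. A filter class is a class closed under isomorphism, substructures $\langle\mathbf{B},F\cap\mathbf{B}\rangle$, products $\langle\prod\mathbf{A}_i,\prod F_i\rangle$ and strict homomorphic preimages (along surjective strict homomorphisms); the filter class generated by a structure is the smallest one containing it. For a set $X$, $Y\subseteq_nX$ means $Y$ non-empty, $Y\subseteq X$, $|Y|\le n$. An $n$-filter is an upset $F$ such that for every non-empty finite $X\subseteq F$, if $\bigwedge Y\in F$ for all $Y\subseteq_nX$ then $\bigwedge X\in F$. $\mathsf{BA}_m$ is the class of all $\langle\mathbf{A},F\rangle$ with $F$ a non-empty $m$-filter. *)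

(* Defs.v *)
(* Boolean algebras are MathComp's complemented distributive
   lattices with top and bottom ([ctbDistrLatticeType]). *)
From mathcomp Require Import all_boot all_order.
Unset Printing Implicit Defensive.
Import Order.Theory Order.DefaultSetSubsetOrder.
Local Open Scope order_scope.

Record structure := Structure {
  sdisp : Order.disp_t;
  salg : ctbDistrLatticeType sdisp;
  sfilt : salg -> Prop }.

Definition is_ba_hom {d1 d2 : Order.disp_t} {A : ctbDistrLatticeType d1}
  {B : ctbDistrLatticeType d2} (h : A -> B) : Prop :=
  (forall x y, h (x `&` y) = h x `&` h y) /\
  (forall x y, h (x `|` y) = h x `|` h y) /\
  (forall x, h (~` x) = ~` h x) /\
  h \bot = \bot /\ h \top = \top.

Definition strict_map (S T : structure) (h : salg S -> salg T) : Prop :=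
  forall x, sfilt S x <-> sfilt T (h x).

Definition embeds_into (S T : structure) : Prop :=
  exists h : salg S -> salg T, is_ba_hom h /\ injective h /\ strict_map S T h.

Definition strict_preimage_of (S T : structure) : Prop :=
  exists h : salg S -> salg T,
    is_ba_hom h /\ (forall y, exists x, h x = y) /\ strict_map S T h.

Definition is_product_of (S : structure) (I : Type) (T : I -> structure) : Prop :=
  exists p : forall i, salg S -> salg (T i),
    (forall i, is_ba_hom (p i)) /\
    (forall f : forall i, salg (T i), exists a, (forall i, p i a = f i) /\
       forall b, (forall i, p i b = f i) -> b = a) /\
    (forall a, sfilt S a <-> forall i, sfilt (T i) (p i a)).

Definition filter_class_closed (K : structure -> Prop) : Prop :=
  (forall S T, K T -> embeds_into S T -> K S) /\
  (forall S T, K T -> strict_preimage_of S T -> K S) /\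
  (forall S (I : Type) (T : I -> structure),
      (forall i, K (T i)) -> is_product_of S I T -> K S).

Definition gen_filter_class (S0 : structure) (S : structure) : Prop :=
  forall K : structure -> Prop, filter_class_closed K -> K S0 -> K S.

Section Filters.
Context {d : Order.disp_t} {A : ctbDistrLatticeType d}.

Definition is_upset (F : A -> Prop) : Prop :=
  forall x y, x <= y -> F x -> F y.

(* Finite subsets are represented by lists (repetitions are harmless:
   a list of length <= k has at most k distinct elements). *)
Definition is_nfilter (k : nat) (F : A -> Prop) : Prop :=
  is_upset F /\
  forall X : seq A, X != [::] -> (forall x, x \in X -> F x) ->
    (forall Y : seq A, Y != [::] -> {subset Y <= X} -> (size Y <= k)%N ->
        F (\meet_(y <- Y) y)) ->
    F (\meet_(x <- X) x).

Definition Delta (xs : seq A) : seq A := (~` \meet_(x <- xs) x) :: xs.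
End Filters.

Definition BmBn (m n : nat) : structure :=
  @Structure _ ({set 'I_m} *p {set 'I_n})%type
    (fun x => x.1 != \bot /\ x.2 != \bot).

(* Main.v *)
Require Import Defs.
From mathcomp Require Import all_boot all_order.
From mathcomp Require Import boolp classical_sets.
From Stdlib Require Import Classical ClassicalEpsilon.
Import Order.Theory.
Local Open Scope order_scope.
Set Implicit Arguments.
Unset Strict Implicit.


Lemma meetI_join {d : Order.disp_t} {A : ctbDistrLatticeType d} (z : A) (T : Type) (s : seq T) (P : pred T) (F : T -> A) :
  z `&` \join_(q <- s | P q) F q = \join_(q <- s | P q) (z `&` F q).
Proof.
elim: s => [|q s IH]; first by rewrite !big_nil meetx0.
by rewrite !big_cons; case: (P q) => //; rewrite meetUr IH.
Qed.

Lemma join_meet {d : Order.disp_t} {A : ctbDistrLatticeType d} (z : A) (T : Type) (s : seq T) (F : T -> A) :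
  z `|` \meet_(q <- s) F q = \meet_(q <- s) (z `|` F q).
Proof.
elim: s => [|q s IH]; first by rewrite !big_nil joinx1.
by rewrite !big_cons joinIr IH.
Qed.

Lemma compl_meet {d : Order.disp_t} {A : ctbDistrLatticeType d} (T : Type) (s : seq T) (F : T -> A) :
  ~` \meet_(q <- s) F q = \join_(q <- s) ~` F q.
Proof.
elim: s => [|q s IH]; first by rewrite !big_nil compl1.
by rewrite !big_cons complI IH.
Qed.

Lemma compl_join {d : Order.disp_t} {A : ctbDistrLatticeType d} (T : Type) (s : seq T) (F : T -> A) :
  ~` \join_(q <- s) F q = \meet_(q <- s) ~` F q.
Proof.
elim: s => [|q s IH]; first by rewrite !big_nil compl0.
by rewrite !big_cons complU IH.
Qed.

Lemma le_bot_le {d : Order.disp_t} {A : ctbDistrLatticeType d} (x a : A) :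
  x `&` ~` a <= \bot -> x <= a.
Proof. by rewrite lex0 disj_leC complK. Qed.

Fixpoint lits {d : Order.disp_t} {A : ctbDistrLatticeType d} (xs : seq A) : seq A :=
  if xs is x :: r then [seq x `&` l | l <- lits r] ++ [seq ~` x `&` l | l <- lits r]
  else [:: \top].

Lemma lits_join {d : Order.disp_t} {A : ctbDistrLatticeType d} (xs : seq A) :
  \join_(q <- lits xs) q = \top.
Proof.
elim: xs => [|x r IH]; first by rewrite big_cons big_nil joinx0.
rewrite /= big_cat !big_map -!meetI_join IH !meetx1. exact: joinxC.
Qed.

Lemma lits_split {d : Order.disp_t} {A : ctbDistrLatticeType d} (xs : seq A) (z u : A) :
  (forall l, l \in lits xs -> z `&` l <= u) -> z <= u.
Proof.
move=> H; rewrite -[z]meetx1 -(lits_join xs) meetI_join.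
by apply/joinsP_seq => l lin _; apply: H.
Qed.

Lemma lits_dec {d : Order.disp_t} {A : ctbDistrLatticeType d} (xs : seq A) q x :
  q \in lits xs -> x \in xs -> (q <= x) || (q <= ~` x).
Proof.
elim: xs q => [|y r IH] q //=.
rewrite mem_cat inE => /orP[] /mapP[l lin ->] /orP[/eqP->|xr].
- by rewrite leIl.
- by case/orP: (IH l lin xr) => H; apply/orP; [left|right]; apply: le_trans H; rewrite leIr.
- by rewrite leIl orbT.
- by case/orP: (IH l lin xr) => H; apply/orP; [left|right]; apply: le_trans H; rewrite leIr.
Qed.

Lemma lits_disj {d : Order.disp_t} {A : ctbDistrLatticeType d} (xs : seq A) p q :
  p \in lits xs -> q \in lits xs -> p != q -> p `&` q = \bot.
Proof.
elim: xs p q => [|y r IH] p q /=.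
  by rewrite !inE => /eqP-> /eqP->; rewrite eqxx.
have key : forall (a b l1 l2 : A), l1 \in lits r -> l2 \in lits r -> a `&` l1 != b `&` l2 ->
   (a = b) -> a `&` l1 `&` (b `&` l2) = \bot.
  move=> a b l1 l2 h1 h2 ne eab; subst b.
  have ne' : l1 != l2 by apply: contraNneq ne => ->.
  apply/eqP; rewrite -lex0 -(IH _ _ h1 h2 ne').
  rewrite lexI; apply/andP; split; [exact: le_trans (leIl _ _) (leIr _ _)|exact: le_trans (leIr _ _) (leIr _ _)].
rewrite !mem_cat => /orP[] /mapP[l1 h1 ->] /orP[] /mapP[l2 h2 ->] ne.
- exact: key.
- apply/eqP; rewrite -lex0 -(meetxC y) lexI; apply/andP; split; [exact: le_trans (leIl _ _) (leIl _ _)|exact: le_trans (leIr _ _) (leIl _ _)].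
- apply/eqP; rewrite -lex0 -(meetxC y) meetC lexI; apply/andP; split; [exact: le_trans (leIl _ _) (leIl _ _)|exact: le_trans (leIr _ _) (leIl _ _)].
- exact: key.
Qed.

Definition Cond {d : Order.disp_t} {A : ctbDistrLatticeType d} (k : nat) (c : A) (xs : seq A) :=
  exists P : seq A, (size P <= k)%N /\ all (fun p => (p <= c) && (p != \bot)) P /\
    all (fun x => has (fun p => p <= x) P) xs.

Definition aP {d : Order.disp_t} {A : ctbDistrLatticeType d} (a : A) (P : seq A) :=
  a `|` \meet_(q <- P) ~` q.

Lemma aP_cons {d : Order.disp_t} {A : ctbDistrLatticeType d} (a q : A) P :
  aP a [:: q] `&` aP a P = aP a (q :: P).
Proof. by rewrite /aP big_cons big_cons big_nil meetx1 -joinIr. Qed.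

Lemma meet_map_aP {d : Order.disp_t} {A : ctbDistrLatticeType d} (a : A) P :
  \meet_(y <- [seq aP a [:: q] | q <- P]) y = aP a P.
Proof.
elim: P => [|q P IH]; first by rewrite big_nil /aP big_nil joinx1.
by rewrite /= big_cons IH aP_cons.
Qed.


Lemma DJ {d : Order.disp_t} {A : ctbDistrLatticeType d} (K P : seq A) (x : A) :
  (forall p q, p \in K -> q \in K -> p != q -> p `&` q = \bot) -> {subset P <= K} ->
  \join_(q <- K | q <= x) q `&` \join_(q <- P) q <= \join_(q <- P | q <= x) q.
Proof.
move=> H1 sPK; rewrite meetC meetI_join; apply/joinsP_seq => q qK qx.
rewrite meetC meetI_join; apply/joinsP_seq => q' q'P _.
case: (eqVneq q q') => [eqq|ne]. { by subst q'; rewrite meetxx; rewrite (big_rem q) //= qx leUl. }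
by rewrite (H1 _ _ qK (sPK _ q'P) ne) le0x.
Qed.

Lemma sub_preim {d : Order.disp_t} {A : ctbDistrLatticeType d} (a : A) (K Y : seq A) :
  {subset Y <= [seq aP a [:: q] | q <- K]} ->
  exists P, [/\ {subset P <= K}, size P = size Y & \meet_(y <- Y) y = aP a P].
Proof.
elim: Y => [|y Y IH] sY.
  by exists [::]; split => //; rewrite big_nil /aP big_nil joinx1.
have [|P [sPK szP eP]] := IH; first by move=> z zY; apply: sY; rewrite inE zY orbT.
have /mapP[q qK ->] := sY y (mem_head _ _).
exists (q :: P); split => //=; first by move=> z; rewrite inE => /orP[/eqP->//|]; apply: sPK.
  by rewrite szP.
by rewrite big_cons eP aP_cons.
Qed.

Lemma LG {d : Order.disp_t} {A : ctbDistrLatticeType d} (m : nat) (F : A -> Prop) (xs : seq A) :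
  (0 < m)%N -> is_nfilter m F -> (forall x, x \in xs -> F x) ->
  forall N (K : seq A) a, (size K <= N)%N ->
  (forall p q, p \in K -> q \in K -> p != q -> p `&` q = \bot) ->
  ~` a <= \join_(q <- K) q ->
  (forall x, x \in xs -> x `&` ~` a <= \join_(q <- K | q <= x) q) ->
  (forall P, {subset P <= K} -> (size P <= m)%N -> exists2 x, x \in xs & all (fun p => ~~ (p <= x)) P) ->
  F a.
Proof.
move=> m0 [Fup Frule] Fxs N; elim: N => [|N IHN] K a szK H1 H3 Hcov Hnt.
all: case: (leqP (size K) m) => szKm.
- have [x xin xall] := Hnt K (fun z h => h) szKm.
  apply: (Fup x); last exact: Fxs.
  apply: le_bot_le; apply: le_trans (Hcov x xin) _.
  apply/joinsP_seq => q qK qx; by move/allP: xall => /(_ q qK); rewrite qx.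
- by move: szK; rewrite leqn0 => /eqP sz0; rewrite sz0 in szKm.
- have [x xin xall] := Hnt K (fun z h => h) szKm.
  apply: (Fup x); last exact: Fxs.
  apply: le_bot_le; apply: le_trans (Hcov x xin) _.
  apply/joinsP_seq => q qK qx; by move/allP: xall => /(_ q qK); rewrite qx.
have claim : forall P, {subset P <= K} -> (size P <= m)%N -> F (aP a P).
  move=> P sPK szP; apply: (IHN P).
  - by apply: leq_trans szP _; rewrite -ltnS; apply: leq_trans szKm szK.
  - by move=> p q pP qP; apply: H1; apply: sPK.
  - by rewrite /aP complU compl_meet; under eq_bigr do rewrite complK; rewrite leIr.
  - move=> x xin; rewrite /aP complU compl_meet; under eq_bigr do rewrite complK.
    rewrite meetA; apply: le_trans (DJ x H1 sPK); apply: leI2 => //; exact: Hcov.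
  - by move=> P' sP' szP'; apply: Hnt => // z zP'; apply: sPK; apply: sP'.
apply: (Fup (aP a K)).
  by rewrite /aP -compl_join leUx lexx /= leCx.
have K0 : K != [::] by case: K szKm {szK H1 H3 Hcov Hnt claim}.
rewrite -meet_map_aP; apply: Frule.
- by case: K K0 {szK H1 H3 Hcov Hnt claim szKm}.
- move=> y /mapP[q qK ->]; apply: claim => //.
  by move=> z; rewrite inE => /eqP->.
- move=> Y _ sY szY; have [P [sPK szP ->]] := sub_preim sY.
  by apply: claim => //; rewrite szP.
Qed.


Lemma le_bot_any {d : Order.disp_t} {A : ctbDistrLatticeType d} (x u : A) : x <= \bot -> x <= u.
Proof. by move=> h; apply: le_trans h (le0x _). Qed.



Lemma G_mfilter {d : Order.disp_t} {A : ctbDistrLatticeType d} (m : nat) (F : A -> Prop) (a : A) (xs : seq A) :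
  (0 < m)%N -> is_nfilter m F -> ~ F a -> (forall x, x \in xs -> F x) -> Cond m (~` a) xs.
Proof.
move=> m0 Fn Fa Fxs; apply: NNPP => nC; apply: Fa.
pose K := [seq q <- lits (a :: xs) | (q <= ~` a) && (q != \bot)].
apply: (LG m0 Fn Fxs (leqnn (size K))).
- by move=> p q; rewrite /K !mem_filter => /andP[_ pl] /andP[_ ql]; exact: (lits_disj pl ql).
- apply: lits_split => l lin.
  have /orP[la|lna] := lits_dec lin (mem_head a xs).
    by apply: le_bot_any; rewrite -(meetCx a); apply: leI2.
  case: (eqVneq l \bot) => [->|lnb]; first by rewrite meetx0 le0x.
  apply: le_trans (leIr _ _) _.
  by rewrite (big_rem l) ?leUl // /K mem_filter lna lnb.
- move=> x xin; apply: lits_split => l lin.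
  have /orP[la|lna] := lits_dec lin (mem_head a xs).
    by apply: le_bot_any; rewrite -(meetCx a); exact: leI2 (leIr _ _) la.
  have xin2 : x \in a :: xs by rewrite inE xin orbT.
  have /orP[lx|lnx] := lits_dec lin xin2.
  + case: (eqVneq l \bot) => [->|lnb]; first by rewrite meetx0 le0x.
    apply: le_trans (leIr _ _) _.
    have lK : l \in K by rewrite /K mem_filter lna lnb.
    by rewrite (big_rem l) //= lx leUl.
  + apply: le_bot_any; rewrite -(meetxC x); apply: leI2 => //; exact: leIl.
- move=> P sPK szP.
  case: (boolP (has (fun x => all (fun p => ~~ (p <= x)) P) xs)) => [/hasP[x xin h]|hn].
    by exists x.
  exfalso; apply: nC; exists P; split => //; split.
    by apply/allP => p /sPK; rewrite /K mem_filter => /andP[].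
  apply/allP => x xin; move/hasPn: hn => /(_ x xin).
  by rewrite -has_predC; apply: sub_has => p /=; rewrite negbK.
Qed.

Lemma G_delta {d : Order.disp_t} {A : ctbDistrLatticeType d} (n : nat) (F : A -> Prop) (xs : seq A) :
  is_upset F -> ~ F \bot ->
  (forall k, (n <= k)%N -> forall ys : seq A, size ys = k ->
     (forall Phi : seq A, Phi != [::] -> {subset Phi <= Delta ys} -> (size Phi <= n)%N ->
        F (\meet_(y <- Phi) y)) -> F \bot) ->
  (forall x, x \in xs -> F x) -> Cond n \top xs.
Proof.
move=> Fup Fb HD Fxs; apply: NNPP => nC.
pose K := [seq q <- lits xs | q != \bot].
have cover : forall x, x \in xs -> has (fun p => p <= x) K.
  move=> x xin; apply: NNPP => /negP /hasPn hK; apply: Fb; apply: (Fup x); last exact: Fxs.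
  apply: lits_split => l lin; have /orP[lx|lnx] := lits_dec lin xin.
    case: (eqVneq l \bot) => [->|lnb]; first by rewrite meetx0.
    have lK : l \in K by rewrite /K mem_filter lnb lin.
    by move: (hK l lK); rewrite lx.
  by rewrite -(meetxC x); apply: leI2.
have xK : forall x, x \in xs -> x <= \join_(q <- K) q.
  move=> x xin; apply: lits_split => l lin; have /orP[lx|lnx] := lits_dec lin xin.
    case: (eqVneq l \bot) => [->|lnb]; first by rewrite meetx0 le0x.
    have lK : l \in K by rewrite /K mem_filter lnb lin.
    by apply: le_trans (leIr _ _) _; rewrite (big_rem l) //= leUl.
  by apply: le_bot_any; rewrite -(meetxC x); apply: leI2.
case: (leqP (size K) n) => szK.
  exfalso; apply: nC; exists K; split => //; split; last exact/allP.
  by apply/allP => p; rewrite /K mem_filter => /andP[-> _]; rewrite lex1.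
apply: Fb; apply: (HD (size K) (ltnW szK) (map (fun z : A => ~` z) K) (size_map _ _)).
move=> Phi Phi0 sPhi szPhi.
pose top := ~` \meet_(y <- map (fun z : A => ~` z) K) y.
pose P := [seq ~` phi | phi <- Phi & phi != top].
have sPK : {subset P <= K}.
  move=> p /mapP[phi]; rewrite mem_filter => /andP[nt phin] ->.
  move: (sPhi _ phin); rewrite /Delta inE -/top (negbTE nt) /= => /mapP[q qK ->].
  by rewrite complK.
case: (boolP (has (fun x => all (fun p => ~~ (p <= x)) P) xs)) => [/hasP[x xin h]|hn]; last first.
  exfalso; apply: nC; exists P; split.
    rewrite size_map; apply: leq_trans szPhi; by rewrite size_filter count_size.
  split.
    by apply/allP => p /sPK; rewrite /K mem_filter => /andP[-> _]; rewrite lex1.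
  apply/allP => x xin; move/hasPn: hn => /(_ x xin).
  by rewrite -has_predC; apply: sub_has => p /=; rewrite negbK.
apply: (Fup x); last exact: Fxs.
apply/meetsP_seq => phi phin _.
case: (eqVneq phi top) => [->|nt].
  by rewrite /top compl_meet big_map; under eq_bigr do rewrite complK; exact: xK.
move: (sPhi _ phin); rewrite /Delta inE -/top (negbTE nt) /= => /mapP[q qK eq].
have qP : q \in P by apply/mapP; exists phi; rewrite ?mem_filter ?nt ?phin // eq complK.
move/allP: h => /(_ q qP) nqx.
have qlits : q \in lits xs by move: qK; rewrite /K mem_filter => /andP[].
have := lits_dec qlits xin; rewrite (negbTE nqx) /= => qnx.
by rewrite eq lexC.
Qed.


Definition ultra {d : Order.disp_t} {A : ctbDistrLatticeType d} (w : A -> Prop) :=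
  (forall b, w b \/ w (~` b)) /\
  (forall ys, (forall y, y \in ys -> w y) -> \meet_(y <- ys) y != \bot).

Definition Good {d : Order.disp_t} {A : ctbDistrLatticeType d} (k : nat) (c : A) (F : A -> Prop) (g : A -> Prop) :=
  forall xs ys, (forall x, x \in xs -> F x) -> (forall y, y \in ys -> g y) ->
  exists p0 (P : seq A), [/\ (p0 <= c) && (p0 != \bot), p0 <= \meet_(y <- ys) y, (size P <= k)%N,
     all (fun p => (p <= c) && (p != \bot)) P &
     all (fun x => (p0 <= x) || has (fun p => p <= x) P) xs].

Lemma chain_fin {T : eqType} (Fam : set (set T)) (ys : seq T) :
  total_on Fam subset -> (forall y, y \in ys -> (bigcup Fam (fun X => X)) y) ->
  ys = [::] \/ exists2 g, Fam g & forall y, y \in ys -> g y.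
Proof.
move=> tot; elim: ys => [|y ys IH] H; first by left.
right; have [g1 Fg1 g1y] := H y (mem_head _ _).
case: (IH (fun z h => H z (ltac:(by rewrite inE h orbT)))) => [->|[g2 Fg2 g2ys]].
  by exists g1 => // z; rewrite inE => /eqP->.
case: (tot _ _ Fg1 Fg2) => s.
  exists g2 => // z; rewrite inE => /orP[/eqP->|zin]; [exact: s|exact: g2ys].
exists g1 => // z; rewrite inE => /orP[/eqP->|zin]; [done|exact: s (g2ys _ zin)].
Qed.

Lemma Good_ext {d : Order.disp_t} {A : ctbDistrLatticeType d} (k : nat) (c : A) (F : A -> Prop) (g : A -> Prop) (b : A) :
  Good k c F g -> Good k c F (fun y => g y \/ y = b) \/ Good k c F (fun y => g y \/ y = ~` b).
Proof.
move=> Gg; apply: NNPP => /not_or_and [n1 n2].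
move: n1 => /existsNP [xs1] /existsNP [ys1] /not_implyP [F1] /not_implyP [g1] n1.
move: n2 => /existsNP [xs2] /existsNP [ys2] /not_implyP [F2] /not_implyP [g2] n2.
pose ys1' := [seq y <- ys1 | `[< g y >]].
pose ys2' := [seq y <- ys2 | `[< g y >]].
have HF : forall x, x \in xs1 ++ xs2 -> F x.
  by move=> x; rewrite mem_cat => /orP[]; [apply: F1|apply: F2].
have Hg : forall y, y \in ys1' ++ ys2' -> g y.
  by move=> y; rewrite mem_cat !mem_filter => /orP[]/andP[/asboolP].
have [p0 [P [/andP[p0c p0b] p0m szP Pok Pcov]]] := Gg (xs1 ++ xs2) (ys1' ++ ys2') HF Hg.
rewrite big_cat /= in p0m.
have m1 : forall y, y \in ys1 -> \meet_(z <- ys1') z `&` b <= y.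
  move=> y yin; case: (g1 y yin) => [gy|->]; last exact: leIr.
  by apply: le_trans (leIl _ _) _; apply: meets_inf_seq => //; rewrite mem_filter yin andbT; apply/asboolP.
have m2 : forall y, y \in ys2 -> \meet_(z <- ys2') z `&` ~` b <= y.
  move=> y yin; case: (g2 y yin) => [gy|->]; last exact: leIr.
  by apply: le_trans (leIl _ _) _; apply: meets_inf_seq => //; rewrite mem_filter yin andbT; apply/asboolP.
case: (boolP (p0 <= ~` b)) => pb.
  apply: n2; exists p0, P; split => //; first by rewrite p0c p0b.
    apply/meetsP_seq => y yin _; apply: le_trans (m2 y yin); rewrite lexI pb andbT.
    exact: le_trans p0m (leIr _ _).
  by apply/allP => x xin; apply: (allP Pcov); rewrite mem_cat xin orbT.
apply: n1; exists (p0 `&` b), P; split => //.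
- rewrite (le_trans (leIl _ _) p0c) /=; apply: contra pb => /eqP h.
  by rewrite -disj_leC h.
- apply/meetsP_seq => y yin _; apply: le_trans (m1 y yin); apply: leI2 => //.
  exact: le_trans p0m (leIl _ _).
- apply/allP => x xin; have := allP Pcov x; rewrite mem_cat xin /= => /(_ isT) /orP[h|->];
    last by rewrite orbT.
  by rewrite (le_trans (leIl _ _) h).
Qed.

Lemma Tr {d : Order.disp_t} {A : ctbDistrLatticeType d} (k : nat) :
  forall (c : A) (F : A -> Prop), c != \bot ->
  (forall xs, (forall x, x \in xs -> F x) -> Cond k c xs) ->
  exists U : nat -> A -> Prop, (forall j, (j < k)%N -> ultra (U j) /\ U j c) /\
    (forall x, F x -> exists2 j, (j < k)%N & U j x).
Proof.
elim: k => [|k IH] c F c0 HC.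
  exists (fun _ _ => True); split => // x Fx; exfalso.
  have [|P [szP [_ cov]]] := HC [:: x]; first by move=> z; rewrite inE => /eqP->.
  by move: szP cov; rewrite leqn0 => /nilP ->.
have G0 : Good k c F (fun _ => False).
  move=> xs [|y ys] HF Hy; last by case: (Hy y (mem_head _ _)).
  have [P' [szP [Pok cov]]] := HC xs HF.
  case: P' szP Pok cov => [|p0 P] szP Pok cov.
    exists c, [::]; split => //; first by rewrite lexx c0.
      by rewrite big_nil lex1.
    by apply: sub_all cov => x.
  exists p0, P; move: Pok => /= /andP[p0ok Pok]; split => //.
  by rewrite big_nil lex1.
have [g [Gg gmax]] : exists g, Good k c F g /\ forall B, (g `<` B)%classic -> ~ Good k c F B.
  apply: (@Zorn_bigcup _ (fun g => Good k c F g)) => Fam FG tot xs ys HF Hy.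
  case: (chain_fin tot Hy) => [->|[g Fg gys]]; first by apply: G0 => // y.
  exact: (FG g Fg xs ys HF gys).
have comp : forall b, g b \/ g (~` b).
  move=> b; case: (Good_ext b Gg) => H; [case: (classic (g b)) => gb; [by left|] | case: (classic (g (~` b))) => gb; [by right|]];
    exfalso; apply: (gmax _ _ H); split; [by move=> y yg; left| |by move=> y yg; left|];
    move=> /(_ _ (or_intror erefl)); exact: gb.
have cons : forall ys, (forall y, y \in ys -> g y) -> \meet_(y <- ys) y != \bot.
  move=> ys Hy; have [p0 [P [/andP[_ p0b] p0m _ _ _]]] := Gg [::] ys (fun x (h : x \in [::]) => False_ind _ (notF h)) Hy.
  by apply: contra p0b => /eqP h; rewrite -lex0 -h.
have gc : g c.
  case: (comp c) => // h.
  have [p0 [P [/andP[p0c p0b] p0m _ _ _]]] := Gg [::] [:: ~` c] (fun x (h : x \in [::]) => False_ind _ (notF h))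
     (fun y yin => ltac:(by move: yin; rewrite inE => /eqP->)).
  move: p0m; rewrite big_cons big_nil meetx1 => p0m.
  by move: p0b; rewrite -lex0 -(meetxC c) lexI p0c p0m.
have [U' [U'u U'cov]] := IH c (fun x => F x /\ ~ g x) c0
  (fun xs HF => ltac:(
    have [p0 [P [/andP[p0c p0b] p0m szP Pok Pcov]]] := Gg xs [seq ~` x | x <- xs]
      (fun x h => proj1 (HF x h))
      (fun y yin => ltac:(move: yin => /mapP[x xin ->]; case: (comp x) => // gx; by case: (proj2 (HF x xin) gx)));
    exists P; split => //; split => //;
    apply/allP => x xin; move: (allP Pcov x xin) => /orP[px|//]; exfalso;
    move: p0b; rewrite -lex0 -(meetxC x) lexI px /= => /negP; apply;
    apply: (le_trans p0m); apply: meets_inf_seq => //; by apply/mapP; exists x)).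
exists (fun j => if j is j'.+1 then U' j' else g); split.
  by case=> [|j] //= jk; apply: U'u.
move=> x Fx; case: (classic (g x)) => gx; first by exists 0%N.
by have [j jk Ujx] := U'cov x (conj Fx gx); exists j.+1.
Qed.


Lemma u_cons2 {d : Order.disp_t} {A : ctbDistrLatticeType d} (w : A -> Prop) x y :
  ultra w -> w x -> w y -> x `&` y != \bot.
Proof.
move=> [_ cons] wx wy; have := cons [:: x; y].
rewrite !big_cons big_nil meetx1; apply => z; rewrite !inE => /orP[/eqP->|/eqP->] //.
Qed.

Lemma u_cons3 {d : Order.disp_t} {A : ctbDistrLatticeType d} (w : A -> Prop) x y z :
  ultra w -> w x -> w y -> w z -> x `&` (y `&` z) != \bot.
Proof.
move=> [_ cons] wx wy wz; have := cons [:: x; y; z].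
rewrite !big_cons big_nil meetx1; apply => t; rewrite !inE => /orP[/eqP->|/orP[/eqP->|/eqP->]] //.
Qed.

Lemma u_bot {d : Order.disp_t} {A : ctbDistrLatticeType d} (w : A -> Prop) :
  ultra w -> ~ w \bot.
Proof. by move=> u wb; have := u_cons2 u wb wb; rewrite meetxx eqxx. Qed.

Lemma u_top {d : Order.disp_t} {A : ctbDistrLatticeType d} (w : A -> Prop) :
  ultra w -> w \top.
Proof. by move=> u; case: (u.1 \top) => //; rewrite compl1 => /(u_bot u). Qed.

Lemma u_compl {d : Order.disp_t} {A : ctbDistrLatticeType d} (w : A -> Prop) x :
  ultra w -> w (~` x) <-> ~ w x.
Proof.
move=> u; split => [wc wx|nw]; last by case: (u.1 x).
by have := u_cons2 u wx wc; rewrite meetxC eqxx.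
Qed.

Lemma u_meet {d : Order.disp_t} {A : ctbDistrLatticeType d} (w : A -> Prop) x y :
  ultra w -> w (x `&` y) <-> w x /\ w y.
Proof.
move=> u; split => [wxy|[wx wy]].
  split; apply: NNPP => nw; move/(u_compl _ u): nw => wc.
    by have := u_cons2 u wxy wc; rewrite meetC meetA meetCx meet0x eqxx.
  by have := u_cons2 u wxy wc; rewrite -meetA meetxC meetx0 eqxx.
apply: NNPP => nw; move/(u_compl _ u): nw => wc.
by have := u_cons3 u wx wy wc; rewrite meetA meetxC eqxx.
Qed.

Lemma u_up {d : Order.disp_t} {A : ctbDistrLatticeType d} (w : A -> Prop) x y :
  ultra w -> x <= y -> w x -> w y.
Proof.
move=> u xy wx; have : w (x `&` y) by move/meet_idPl: xy => ->.
by case/(u_meet _ _ u).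
Qed.

Lemma u_join {d : Order.disp_t} {A : ctbDistrLatticeType d} (w : A -> Prop) x y :
  ultra w -> w (x `|` y) <-> w x \/ w y.
Proof.
move=> u; rewrite -[x `|` y]complK complU (u_compl _ u) (u_meet _ _ u) !(u_compl _ u).
by split; [move/not_and_or; case=> /NNPP; [left|right] | case=> h [h1 h2]].
Qed.

Definition hUV {d : Order.disp_t} {A : ctbDistrLatticeType d} (m n : nat) (U V : nat -> A -> Prop) (x : A)
  : salg (BmBn m n) :=
  ([set j : 'I_m | `[< U j x >]], [set j : 'I_n | `[< V j x >]]).

Lemma hUV_hom {d : Order.disp_t} {A : ctbDistrLatticeType d} (m n : nat) (U V : nat -> A -> Prop) :
  (forall j, (j < m)%N -> ultra (U j)) -> (forall j, (j < n)%N -> ultra (V j)) ->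
  is_ba_hom (hUV m n U V).
Proof.
move=> hU hV; split; [|split; [|split; [|split]]].
- move=> x y; rewrite /hUV; congr pair; apply/setP => j; rewrite !inE -asbool_and;
    apply: asbool_equiv_eq; apply: u_meet; [exact: hU|exact: hV].
- move=> x y; rewrite /hUV; congr pair; apply/setP => j; rewrite !inE -asbool_or;
    apply: asbool_equiv_eq; apply: u_join; [exact: hU|exact: hV].
- move=> x; rewrite /hUV; congr pair; apply/setP => j; rewrite !inE -asbool_neg;
    apply: asbool_equiv_eq; apply: u_compl; [exact: hU|exact: hV].
- rewrite /hUV; congr pair; apply/setP => j; rewrite !inE; apply: asboolF; apply: u_bot;
    [exact: hU|exact: hV].
- rewrite /hUV; congr pair; apply/setP => j; rewrite !inE; apply: asboolT; apply: u_top;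
    [exact: hU|exact: hV].
Qed.

Unset Implicit Arguments.


Definition projP {I : Type} (m n : nat) (i : I) (X : set (I * ('I_m + 'I_n))) : salg (BmBn m n) :=
  ([set j : 'I_m | `[< X (i, inl j) >]], [set j : 'I_n | `[< X (i, inr j) >]]).

Definition glue {I : Type} (m n : nat) (f : I -> salg (BmBn m n)) : set (I * ('I_m + 'I_n)) :=
  fun z => match z.2 with inl j => is_true (j \in (f z.1).1) | inr j => is_true (j \in (f z.1).2) end.

Lemma proj_glue {I : Type} (m n : nat) (f : I -> salg (BmBn m n)) i : projP m n i (glue m n f) = f i.
Proof.
rewrite /projP /glue /=; case: (f i) => a b /=; congr pair; apply/setP => j; by rewrite inE asboolb.
Qed.

Lemma proj_inj {I : Type} (m n : nat) (X Y : set (I * ('I_m + 'I_n))) :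
  (forall i, projP m n i X = projP m n i Y) -> X = Y.
Proof.
move=> H; apply: funext => -[i j].
have [h1 h2] : (projP m n i X).1 = (projP m n i Y).1 /\ (projP m n i X).2 = (projP m n i Y).2 by rewrite H.
apply: propext; case: j => j.
  move/setP: h1 => /(_ j); rewrite !inE => e.
  by split => h; [apply/asboolP; rewrite -e; apply/asboolP|apply/asboolP; rewrite e; apply/asboolP].
move/setP: h2 => /(_ j); rewrite !inE => e.
by split => h; [apply/asboolP; rewrite -e; apply/asboolP|apply/asboolP; rewrite e; apply/asboolP].
Qed.

Lemma projP_hom {I : Type} (m n : nat) (i : I) : is_ba_hom (projP m n i).
Proof.
split; [|split; [|split; [|split]]].
- by move=> X Y; rewrite /projP; congr pair; apply/setP => j; rewrite !inE -asbool_and.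
- by move=> X Y; rewrite /projP; congr pair; apply/setP => j; rewrite !inE -asbool_or.
- by move=> X; rewrite /projP; congr pair; apply/setP => j; rewrite !inE -asbool_neg.
- by rewrite /projP; congr pair; apply/setP => j; rewrite !inE asboolF.
- by rewrite /projP; congr pair; apply/setP => j; rewrite !inE asboolT.
Qed.

Lemma sep1 {d : Order.disp_t} {A : ctbDistrLatticeType d} (x y : A) :
  ~~ (x <= y) -> exists w, ultra w /\ w x /\ ~ w y.
Proof.
move=> nxy; have c0 : x `&` ~` y != \bot by rewrite disj_leC complK.
have HC : forall xs : seq A, (forall z, z \in xs -> False) -> Cond 1 (x `&` ~` y) xs.
  by move=> [|x0 xs] HF; [exists [::] | case: (HF x0 (mem_head _ _))].
have [U [Uu _]] := Tr c0 HC.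
have [u uc] := Uu 0%N isT.
exists (U 0%N); split => //; split; first exact: u_up u (leIl _ _) uc.
by apply/(u_compl _ u); apply: u_up u (leIr _ _) uc.
Qed.

Lemma sep {d : Order.disp_t} {A : ctbDistrLatticeType d} (x y : A) :
  x <> y -> exists w, ultra w /\ ((w x /\ ~ w y) \/ (w y /\ ~ w x)).
Proof.
move=> ne; case: (boolP (x <= y)) => xy.
  case: (boolP (y <= x)) => yx; first by case: ne; apply/le_anti; rewrite xy yx.
  by have [w [u [wy nwx]]] := sep1 y x yx; exists w; split => //; right.
by have [w [u [wx nwy]]] := sep1 x y xy; exists w; split => //; left.
Qed.

Lemma set0_ne (k : nat) (P : nat -> Prop) :
  (exists2 j, (j < k)%N & P j) -> [set j : 'I_k | `[< P j >]] != finset.set0.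
Proof.
by move=> [j jk Pj]; apply/set0Pn; exists (Ordinal jk); rewrite inE; apply/asboolP.
Qed.

Lemma set0_eq (k : nat) (P : nat -> Prop) :
  (forall j, (j < k)%N -> ~ P j) -> [set j : 'I_k | `[< P j >]] = finset.set0.
Proof.
by move=> H; apply/setP => j; rewrite !inE; apply: asboolF; apply: H.
Qed.

Lemma hard (m n : nat) (S : structure) :
  (0 < n)%N -> (n < m)%N -> is_nfilter m (sfilt S) -> (exists a, sfilt S a) ->
  (forall (k : nat), (n <= k)%N -> forall xs : seq (salg S), size xs = k ->
     (forall Phi : seq (salg S), Phi != [::] -> {subset Phi <= Delta xs} ->
        (size Phi <= n)%N -> sfilt S (\meet_(y <- Phi) y)) -> sfilt S \bot) ->
  gen_filter_class (BmBn m n) S.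
Proof.
move=> n0 nm Fn [a0 Fa0] HD K [Kemb [Kpre Kprod]] KB.
have m0 : (0 < m)%N by apply: ltn_trans n0 nm.
have Fup := Fn.1.
have Ftop : sfilt S \top by apply: Fup Fa0; exact: lex1.
have pickUV : forall a : salg S, ~ sfilt S a ->
   exists UV : (nat -> salg S -> Prop) * (nat -> salg S -> Prop),
   [/\ (forall j, (j < m)%N -> ultra (UV.1 j) /\ UV.1 j (~` a)),
       (forall x, sfilt S x -> exists2 j, (j < m)%N & UV.1 j x),
       (forall j, (j < n)%N -> ultra (UV.2 j)) &
       (forall x, sfilt S x -> exists2 j, (j < n)%N & UV.2 j x)].
  move=> a Fa.
  have Fb : ~ sfilt S \bot by move=> h; apply: Fa; apply: Fup h; exact: le0x.
  have ca : ~` a != \bot.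
    apply/negP => /eqP h; apply: Fa; move: (f_equal (fun z => ~` z) h).
    by rewrite complK compl0 => ->.
  have [U [Uu Ucov]] := Tr ca (fun xs HF => G_mfilter m0 Fn Fa HF).
  have t0 : (\top : salg S) != \bot by apply/negP => /eqP h; apply: Fb; rewrite -h.
  have [V [Vu Vcov]] := Tr t0 (fun xs HF => G_delta Fup Fb HD HF).
  by exists (U, V); split => //= j jn; case: (Vu j jn).
pose I := ({a : salg S | ~ sfilt S a} + {w : salg S -> Prop | ultra w})%type.
pose pick := fun a : {a : salg S | ~ sfilt S a} =>
  constructive_indefinite_description _ (pickUV _ (svalP a)).
pose hh : I -> salg S -> salg (BmBn m n) := fun i => match i with
  | inl a => hUV m n (sval (pick a)).1 (sval (pick a)).2
  | inr w => hUV m n (fun _ => sval w) (fun _ => sval w) end.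
pose Pfilt : I -> salg (BmBn m n) -> Prop := fun i => match i with
  | inl _ => sfilt (BmBn m n) | inr _ => fun _ => True end.
have hh_hom : forall i, is_ba_hom (hh i).
  case=> [a|w] /=; last by apply: hUV_hom => j _; exact: (svalP w).
  have [Uu _ Vu _] := svalP (pick a).
  by apply: hUV_hom => // j jm; case: (Uu j jm).
have hh_strict : forall x, sfilt S x <-> forall i, Pfilt i (hh i x).
  move=> x; split => [Fx [a|w] //=|H].
    have [_ Ucov _ Vcov] := svalP (pick a).
    by split; [exact: (set0_ne _ _ (Ucov x Fx))|exact: (set0_ne _ _ (Vcov x Fx))].
  apply: NNPP => nFx; have := H (inl (exist _ x nFx)); rewrite /= => -[h _].
  have [Uu _ _ _] := svalP (pick (exist _ x nFx)).
  case/negP: h; apply/eqP.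
  have e := set0_eq m (fun j => (sval (pick (exist _ x nFx))).1 j x)
    (fun j jm => ltac:(have [u c] := Uu j jm; by apply/(u_compl _ u))).
  exact: e.
pose T := fun i => @Structure _ (salg (BmBn m n)) (Pfilt i).
pose J := ('I_m + 'I_n)%type.
pose Prod := @Structure _ (set (I * J)) (fun X => forall i, Pfilt i (projP m n i X)).
have allEq : forall X Y : set (False * J), X = Y by move=> X Y; apply: funext => -[[]].
pose Triv := @Structure _ (set (False * J)) (fun _ => True).
have KTriv : K Triv.
  apply: (Kprod Triv False (fun _ => BmBn m n)); first by case.
  exists (fun i : False => match i with end); split; first by case.
  split; last by move=> a; split => // _ [].
  by move=> f; exists \bot; split => [[]|b _]; apply: allEq.
pose Bfull := @Structure _ (salg (BmBn m n)) (fun _ => True).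
have KBfull : K Bfull.
  apply: (Kpre Bfull Triv KTriv).
  exists (fun _ => \bot); split; first by split; [|split; [|split; [|split]]] => *; apply: allEq.
  by split => [y|x]; [exists \bot; apply: allEq|].
have KT : forall i, K (T i) by case=> [a|w]; [exact: KB|exact: KBfull].
have KProd : K Prod.
  apply: (Kprod Prod I T KT).
  exists (fun i => projP m n i); split; first by move=> i; exact: projP_hom.
  split; last by [].
  move=> f; exists (glue m n f); split; first by move=> i; exact: proj_glue.
  by move=> b Hb; apply: proj_inj => i; rewrite Hb proj_glue.
apply: (Kemb S Prod KProd).
pose H := fun x => glue m n (fun i => hh i x).
have projH : forall i x, projP m n i (H x) = hh i x by move=> i x; exact: proj_glue.
exists H; split; last split.
- split; [|split; [|split; [|split]]].
  + by move=> x y; apply: proj_inj => i; rewrite (projP_hom m n i).1 !projH (hh_hom i).1.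
  + by move=> x y; apply: proj_inj => i; rewrite (projP_hom m n i).2.1 !projH (hh_hom i).2.1.
  + by move=> x; apply: proj_inj => i; rewrite (projP_hom m n i).2.2.1 !projH (hh_hom i).2.2.1.
  + by apply: proj_inj => i; rewrite (projP_hom m n i).2.2.2.1 !projH (hh_hom i).2.2.2.1.
  + by apply: proj_inj => i; rewrite (projP_hom m n i).2.2.2.2 !projH (hh_hom i).2.2.2.2.
- move=> x y Hxy; apply: NNPP => ne; have [w [u hw]] := sep x y ne.
  have := f_equal (projP m n (inr (exist _ w u))) Hxy; rewrite !projH /= /hUV => -[] /setP /(_ (Ordinal m0)).
  rewrite !inE => e _.
  by case: hw => -[h1 h2]; [apply: h2; apply/asboolP; rewrite -e; apply/asboolP|apply: h2; apply/asboolP; rewrite e; apply/asboolP].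
- move=> x; rewrite hh_strict /=; split => h i; [by rewrite projH|by move: (h i); rewrite projH].
Qed.


Lemma hom_le {d1 d2 : Order.disp_t} {A : ctbDistrLatticeType d1} {B : ctbDistrLatticeType d2} (h : A -> B) x y :
  is_ba_hom h -> x <= y -> h x <= h y.
Proof. by move=> [hm _] /meet_idPl e; apply/meet_idPl; rewrite -hm e. Qed.

Lemma hom_meets {d1 d2 : Order.disp_t} {A : ctbDistrLatticeType d1} {B : ctbDistrLatticeType d2} (h : A -> B) (Y : seq A) :
  is_ba_hom h -> h (\meet_(y <- Y) y) = \meet_(y <- map h Y) y.
Proof.
move=> hh; elim: Y => [|y Y IH]; first by rewrite !big_nil; case: hh => _ [_ [_ [_ ->]]].
by rewrite /= !big_cons hh.1 IH.
Qed.

Lemma lift_sub {T1 : eqType} {T2 : eqType} (h : T1 -> T2) (X : seq T1) (Y' : seq T2) :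
  {subset Y' <= map h X} -> exists Y, {subset Y <= X} /\ map h Y = Y'.
Proof.
elim: Y' => [|y Y' IH] s; first by exists [::].
have [|Y [sY eY]] := IH; first by move=> z zin; apply: s; rewrite inE zin orbT.
have /mapP[x xin ex] := s y (mem_head _ _).
exists (x :: Y); split; last by rewrite /= eY ex.
by move=> z; rewrite inE => /orP[/eqP->//|]; apply: sY.
Qed.

Lemma nfilter_pull {d1 d2 : Order.disp_t} {A : ctbDistrLatticeType d1} {B : ctbDistrLatticeType d2} (h : A -> B) (k : nat) (G : B -> Prop) :
  is_ba_hom h -> is_nfilter k G -> is_nfilter k (fun x => G (h x)).
Proof.
move=> hh [Gup Grule]; split; first by move=> x y xy; apply: Gup; exact: hom_le.
move=> X X0 HX HY; rewrite hom_meets //; apply: Grule.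
- by case: X X0 {HX HY}.
- by move=> z /mapP[x xin ->]; apply: HX.
- move=> Y' Y0 sY szY; have [Y [sYX eY]] := lift_sub h X Y' sY.
  rewrite -eY -hom_meets //; apply: HY => //.
    by move: Y0; rewrite -eY; case: Y {sYX eY}.
  by rewrite -(size_map h) eY.
Qed.

Lemma nfilter_inter {d : Order.disp_t} {A : ctbDistrLatticeType d} (I : Type) (k : nat) (G : I -> A -> Prop) :
  (forall i, is_nfilter k (G i)) -> is_nfilter k (fun x => forall i, G i x).
Proof.
move=> HG; split; first by move=> x y xy Gx i; apply: (HG i).1 xy (Gx i).
move=> X X0 HX HY i; apply: (HG i).2 => //.
- by move=> x xin; apply: HX.
- by move=> Y Y0 sY szY; apply: HY.
Qed.

Lemma nfilter_ext {d : Order.disp_t} {A : ctbDistrLatticeType d} (k : nat) (G G' : A -> Prop) :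
  (forall x, G x <-> G' x) -> is_nfilter k G -> is_nfilter k G'.
Proof.
move=> e [Gup Grule]; split; first by move=> x y xy /e Gx; apply/e; apply: Gup xy Gx.
move=> X X0 HX HY; apply/e; apply: Grule => //.
- by move=> x xin; apply/e; apply: HX.
- by move=> Y Y0 sY szY; apply/e; apply: HY.
Qed.

Definition P1 (m n : nat) (S : structure) : Prop :=
  is_nfilter m (sfilt S) /\ (exists a, sfilt S a) /\
  ((forall a, sfilt S a) \/
   exists G : salg S -> Prop, is_nfilter n G /\ (exists a, ~ G a) /\ (forall a, sfilt S a -> G a)).

Lemma proper_bot {d : Order.disp_t} {A : ctbDistrLatticeType d} (G : A -> Prop) :
  is_upset G -> (exists a, ~ G a) -> ~ G \bot.
Proof. by move=> Gup [a Ga] Gb; apply: Ga; apply: Gup Gb; exact: le0x. Qed.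

Lemma P1_pull (m n : nat) (S T : structure) (h : salg S -> salg T) :
  P1 m n T -> is_ba_hom h -> (forall x, sfilt S x <-> sfilt T (h x)) -> P1 m n S.
Proof.
move=> [Tm [[a Ta] Tc]] hh e; split.
  by apply: (nfilter_ext m _ _ (fun x => iff_sym (e x))); apply: nfilter_pull.
split.
  exists \top; apply/e; apply: Tm.1 Ta; rewrite hh.2.2.2.2; exact: lex1.
case: Tc => [full|[G [Gn [[b Gb] FG]]]]; first by left => x; apply/e.
right; exists (fun x => G (h x)); split; first exact: nfilter_pull.
split; last by move=> x /e; apply: FG.
by exists \bot; rewrite hh.2.2.2.1; apply: proper_bot Gn.1 _; exists b.
Qed.

Lemma P1_closed (m n : nat) : filter_class_closed (P1 m n).
Proof.
split; [|split].
- by move=> S T PT [h [hh [_ e]]]; exact: P1_pull PT hh e.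
- by move=> S T PT [h [hh [_ e]]]; exact: P1_pull PT hh e.
move=> S I T PT [p [ph [pex pe]]]; split.
  apply: (nfilter_ext m _ _ (fun x => iff_sym (pe x))); apply: nfilter_inter => i.
  by apply: nfilter_pull => //; case: (PT i).
split.
  have [a [pa _]] := pex (fun i => \top); exists a; apply/pe => i; rewrite pa.
  have [Tm [[b Tb] _]] := PT i; apply: Tm.1 Tb; exact: lex1.
case: (classic (forall i y, sfilt (T i) y)) => [full|nfull].
  by left => a; apply/pe => i; apply: full.
have [i0 ni0] := not_all_ex_not _ _ nfull.
have [_ [_ [full|[G [Gn [[b Gb] FG]]]]]] := PT i0; first by case: ni0.
right; exists (fun x => G (p i0 x)); split; first exact: nfilter_pull.
split; last by move=> x /pe /(_ i0); apply: FG.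
by exists \bot; rewrite (ph i0).2.2.2.1; apply: proper_bot Gn.1 _; exists b.
Qed.


Lemma mem_meet1 (m n : nat) (Y : seq (salg (BmBn m n))) j :
  (j \in (\meet_(y <- Y) y).1) = all (fun y : salg (BmBn m n) => j \in y.1) Y.
Proof.
elim: Y => [|y Y IH]; first by rewrite big_nil; case: m j => [|m] j; rewrite /= ?inE.
by rewrite big_cons /= -IH inE.
Qed.

Lemma mem_meet2 (m n : nat) (Y : seq (salg (BmBn m n))) j :
  (j \in (\meet_(y <- Y) y).2) = all (fun y : salg (BmBn m n) => j \in y.2) Y.
Proof.
elim: Y => [|y Y IH]; first by rewrite big_nil; case: n j => [|n] j; rewrite /= ?inE.
by rewrite big_cons /= -IH inE.
Qed.

Lemma choose_seq {T1 T2 : eqType} (X : seq T1) (P : T1 -> T2 -> bool) (s : seq T2) :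
  (forall j, j \in s -> exists2 x, x \in X & ~~ P x j) ->
  exists Y, [/\ {subset Y <= X}, size Y = size s & forall j, j \in s -> has (fun y => ~~ P y j) Y].
Proof.
elim: s => [|j s IH] H; first by exists [::].
have [|Y [sY szY hY]] := IH; first by move=> z zin; apply: H; rewrite inE zin orbT.
have [x xin nP] := H j (mem_head _ _).
exists (x :: Y); split => /=.
- by move=> z; rewrite inE => /orP[/eqP->//|]; apply: sY.
- by rewrite szY.
- move=> z; rewrite inE => /orP[/eqP->|zin]; first by rewrite nP.
  by rewrite (hY z zin) orbT.
Qed.



Lemma comp_rule (m n k : nat) (pi : salg (BmBn m n) -> {set 'I_k}) (F : salg (BmBn m n) -> Prop) (X : seq (salg (BmBn m n))) :
  (0 < k)%N ->
  (forall Y, (forall j, (j \in pi (\meet_(y <- Y) y)) = all (fun y => j \in pi y) Y)) ->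
  (forall x, F x -> pi x != finset.set0) ->
  (forall Y, Y != [::] -> {subset Y <= X} -> (size Y <= k)%N -> F (\meet_(y <- Y) y)) ->
  pi (\meet_(x <- X) x) != finset.set0.
Proof.
move=> k0 mem Fpi HY; apply/negP => /eqP e.
have H : forall j, j \in enum 'I_k -> exists2 x, x \in X & ~~ (j \in pi x).
  move=> j _; have : j \notin pi (\meet_(x <- X) x) by rewrite e inE.
  by rewrite mem => /allPn[x xin nj]; exists x.
have [Y [sY szY hY]] := choose_seq X (fun x j => j \in pi x) _ H.
have Y0 : Y != [::].
  by apply/negP => /eqP Y0; move: szY; rewrite Y0 size_enum_ord => k0'; rewrite -k0' in k0.
have szk : (size Y <= k)%N by rewrite szY size_enum_ord.
move: (Fpi _ (HY Y Y0 sY szk)) => /negP; apply; apply/eqP/setP => j; rewrite inE mem.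
by apply/negbTE; rewrite -has_predC; apply: hY; rewrite mem_enum.
Qed.

Lemma P1_BmBn (m n : nat) : (0 < n)%N -> (n < m)%N -> P1 m n (BmBn m n).
Proof.
move=> n0 nm; have m0 : (0 < m)%N by apply: ltn_trans n0 nm.
split.
  split; first by move=> x y xy [h1 h2]; move: xy => /andP[/= l1 l2]; split;
    [apply: contraNneq h1 => e; rewrite -lex0 -e; exact: l1|apply: contraNneq h2 => e; rewrite -lex0 -e; exact: l2].
  move=> X X0 HX HY; split.
    apply: (comp_rule m n m (fun x => x.1) (sfilt (BmBn m n)) X m0 (fun Y j => mem_meet1 m n Y j)).
      by move=> x [].
    by move=> Y Y0 sY szY; apply: HY.
  apply: (comp_rule m n n (fun x => x.2) (sfilt (BmBn m n)) X n0 (fun Y j => mem_meet2 m n Y j)).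
    by move=> x [].
  by move=> Y Y0 sY szY; apply: HY => //; apply: leq_trans szY (ltnW nm).
split.
  exists \top; split; apply/set0Pn; [exists (Ordinal m0)|exists (Ordinal n0)];
    by rewrite /= inE.
right; exists (fun x : salg (BmBn m n) => x.2 != \bot); split.
  split; first by move=> x y /andP[_ l2] h2; apply: contraNneq h2 => e; rewrite -lex0 -e; exact: l2.
  move=> X X0 HX HY.
  apply: (comp_rule m n n (fun x => x.2) (fun x => x.2 != \bot) X n0 (fun Y j => mem_meet2 m n Y j)) => //.
split; last by move=> x [].
by exists \bot; rewrite eqxx.
Qed.


Lemma P1_P2 (m n : nat) (S : structure) : (0 < n)%N -> P1 m n S ->
  forall (k : nat), (n <= k)%N ->
  forall xs : seq (salg S), size xs = k ->
    (forall Phi : seq (salg S), Phi != [::] -> {subset Phi <= Delta xs} ->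
       (size Phi <= n)%N -> sfilt S (\meet_(y <- Phi) y)) ->
    sfilt S \bot.
Proof.
move=> n0 [_ [_ [full|[G [Gn [Ga FG]]]]]] k nk xs szk HPhi; first exact: full.
exfalso; apply: (proper_bot G Gn.1 Ga).
have -> : (\bot : salg S) = \meet_(y <- Delta xs) y by rewrite /Delta big_cons meetCx.
apply: Gn.2 => //.
- by move=> x xin; apply: FG; have := HPhi [:: x] isT; rewrite big_cons big_nil meetx1; apply => //;
    move=> z; rewrite inE => /eqP->.
- by move=> Y Y0 sY szY; apply: FG; apply: HPhi.
Qed.

Lemma gen_P1 (m n : nat) (S : structure) : (0 < n)%N -> (n < m)%N ->
  gen_filter_class (BmBn m n) S -> P1 m n S.
Proof. by move=> n0 nm g; apply: g; [exact: P1_closed|exact: P1_BmBn]. Qed.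

Theorem mainTheorem18 (m n : nat) :
  (1 <= n)%N -> (n < m)%N ->
  forall S : structure,
    (gen_filter_class (BmBn m n) S <->
       (is_nfilter m (sfilt S) /\ (exists a, sfilt S a) /\
        ((forall a, sfilt S a) \/
         exists G : salg S -> Prop,
           is_nfilter n G /\ (exists a, ~ G a) /\
           (forall a, sfilt S a -> G a)))) /\
    (gen_filter_class (BmBn m n) S <->
       (is_nfilter m (sfilt S) /\ (exists a, sfilt S a) /\
        forall (k : nat), (n <= k)%N ->
        forall xs : seq (salg S), size xs = k ->
          (forall Phi : seq (salg S), Phi != [::] -> {subset Phi <= Delta xs} ->
              (size Phi <= n)%N -> sfilt S (\meet_(y <- Phi) y)) ->
          sfilt S \bot)).
Proof.
move=> n0 nm S; split; split.
- exact: gen_P1.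
- move=> P; have [Fm [Fne _]] := P; apply: hard => //; exact: P1_P2 n0 P.
- move=> g; have P := gen_P1 m n S n0 nm g; have [Fm [Fne _]] := P.
  by split => //; split => //; exact: P1_P2 n0 P.
- by move=> [Fm [Fne HD]]; apply: hard.
Qed.
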